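(* Let $\mathcal{H}_A,\mathcal{H}_B$ be finite-dimensional Hilbert spaces with a fixed reference basis $\{|i\rangle_A\}$ of $\mathcal{H}_A$. For every state $\rho_{AB}$ on $\mathcal{H}_A\otimes\mathcal{H}_B$ with reduced state $\rho_A$, $$C^{A|B}_{l_1}(\rho_{AB})^2-C_{l_1}(\rho_A)^2\geq 2\left(\mathrm{Tr}\,\rho_{AB}^2-\mathrm{Tr}\,\rho_A^2\right).$$
   Context: $C_{l_1}(\rho_A)=\sum_{i\neq j}|\langle i|\rho_A|j\rangle|$. Writing $\rho_{AB}=\sum_{i,j}|i\rangle\langle j|_A\otimes\rho^B_{ij}$ with $\rho^B_{ij}=\langle i|\rho_{AB}|j\rangle_A$, $C^{A|B}_{l_1}(\rho_{AB})=\sum_{i\neq j}\|\rho^B_{ij}\|_{\mathrm{tr}}$, where $\|X\|_{\mathrm{tr}}=\mathrm{Tr}\sqrt{X^\dagger X}$. *)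

(* Defs.v *)
From HB Require Import structures.
From mathcomp Require Import all_boot all_order all_algebra.
From mathcomp Require Import reals.
From mathcomp.real_closed Require Import complex.
From Stdlib Require Import ClassicalEpsilon.
Set Implicit Arguments. Unset Strict Implicit. Unset Printing Implicit Defensive.
Import Order.TTheory GRing.Theory Num.Theory.
Local Open Scope ring_scope.

Section QDefs.
Variable R : realType.
Local Notation C := (R[i]).

Definition adjmx (p q : nat) (A : 'M[C]_(p, q)) : 'M[C]_(q, p) :=
  map_mx Num.conj A^T.

Definition psdmx (p : nat) (A : 'M[C]_p) : Prop :=
  adjmx A = A /\ forall v : 'cV[C]_p, 0 <= (adjmx v *m A *m v) 0 0.

Definition density (p : nat) (A : 'M[C]_p) : Prop := psdmx A /\ \tr A = 1.

(* the (unique) positive semidefinite square root of a matrix M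
   (meaningful for M psd, where it exists and is unique) *)
Definition msqrt (p : nat) (M : 'M[C]_p) : 'M[C]_p :=
  epsilon (inhabits 0) (fun P => psdmx P /\ P *m P = M).

Definition trnorm (p q : nat) (X : 'M[C]_(p, q)) : C :=
  \tr (msqrt (adjmx X *m X)).

(* H_A (x) H_B with dim H_A = m, dim H_B = n; basis |i>|k> is indexed by
   mxvec_index i k : 'I_(m * n). *)
Definition blockB (m n : nat) (rho : 'M[C]_(m * n)) (i j : 'I_m) : 'M[C]_n :=
  \matrix_(k, l) rho (mxvec_index i k) (mxvec_index j l).

Definition ptraceB (m n : nat) (rho : 'M[C]_(m * n)) : 'M[C]_m :=
  \matrix_(i, j) \tr (blockB rho i j).

Definition Cl1 (m : nat) (rhoA : 'M[C]_m) : C :=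
  \sum_(i < m) \sum_(j < m | i != j) `|rhoA i j|.

Definition Cl1AB (m n : nat) (rho : 'M[C]_(m * n)) : C :=
  \sum_(i < m) \sum_(j < m | i != j) trnorm (blockB rho i j).

End QDefs.

(* Main.v *)
Require Import Defs.
From HB Require Import structures.
From mathcomp Require Import all_boot all_order all_algebra.
From mathcomp Require Import reals.
From mathcomp.real_closed Require Import complex.
From Stdlib Require Import ClassicalEpsilon.
Import Order.TTheory GRing.Theory Num.Theory.
Local Open Scope ring_scope.
Local Open Scope sesquilinear_scope.
Set Implicit Arguments. Unset Strict Implicit. Unset Printing Implicit Defensive.

Lemma sq_diff_sum (K : numDomainType) (I : finType) (P : pred I) (a b : I -> K) :
  (\sum_(x | P x) a x) ^+ 2 - (\sum_(x | P x) b x) ^+ 2 =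
  \sum_(x | P x) \sum_(y | P y) (a x * a y - b x * b y).
Proof.
rewrite !expr2 !mulr_suml -sumrB; apply: eq_bigr => x _; rewrite !mulr_sumr -sumrB //.
Qed.

Lemma alg_ineq (K : numDomainType) (m : nat) (t c f : 'I_m -> 'I_m -> K) :
  (forall i j, 0 <= c i j) -> (forall i j, c i j <= t i j) ->
  (forall i j, 0 <= f i j) -> (forall i j, f i j <= t i j ^+ 2) ->
  (forall i j, f i j = f j i) -> (forall i j, c i j = c j i) ->
  (forall i, f i i <= c i i ^+ 2) ->
  2 * (\sum_i \sum_j f i j - \sum_i \sum_j c i j ^+ 2) <=
  (\sum_i \sum_(j | i != j) t i j) ^+ 2 - (\sum_i \sum_(j | i != j) c i j) ^+ 2.
Proof.
move=> c0 ct f0 ft fs cs fd.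
have t0 : forall i j, 0 <= t i j by move=> i j; exact: le_trans (ct i j).
rewrite !(pair_big_dep xpredT (fun i j => i != j)) /= sq_diff_sum.
have R1 : 2 * (\sum_i \sum_j f i j - \sum_i \sum_j c i j ^+ 2) =
   \sum_p (2 * (f p.1 p.2 - c p.1 p.2 ^+ 2)).
  rewrite -sumrB mulr_sumr -(pair_big xpredT xpredT (fun i j => 2 * (f i j - c i j ^+ 2))) /=; apply: eq_bigr => i _; rewrite -sumrB mulr_sumr; by [].
rewrite R1 (bigID (fun p : 'I_m * 'I_m => p.1 != p.2)) /= -[X in _ <= X]addr0.
apply: lerD; last first.
  apply: sumr_le0 => p /negPn /eqP pe; rewrite pmulr_rle0 // subr_le0 pe; exact: fd.
apply: ler_sum => -[i j] /= ij.
rewrite (bigD1 (i, j)) //= (bigD1 (j, i)) /=; last first.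
  by rewrite eq_sym ij /= xpair_eqE negb_and eq_sym ij.
rewrite addrA; apply: ler_wpDr.
  apply: sumr_ge0 => q _; rewrite subr_ge0 ler_pM //.
rewrite -(cs i j) mulr_natl mulr2n -expr2.
have fij := ft i j; have fji := ft j i; rewrite -fs in fji.
apply: lerD; rewrite lerD2r //.
have : f i j ^+ 2 <= (t i j * t j i) ^+ 2.
  by rewrite exprMn expr2 ler_pM.
by rewrite ler_pXn2r // nnegrE // mulr_ge0.
Qed.

Section S.
Variable R : realType.
Local Notation C := (R[i]).

Lemma adjmxE p q (A : 'M[C]_(p, q)) : adjmx A = A ^t*. Proof. by []. Qed.

Lemma adjmxM p q r (A : 'M[C]_(p, q)) (B : 'M[C]_(q, r)) :
  adjmx (A *m B) = adjmx B *m adjmx A.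
Proof. by rewrite !adjmxE trmx_mul map_mxM. Qed.

Lemma adjmxK p q (A : 'M[C]_(p, q)) : adjmx (adjmx A) = A.
Proof. by rewrite !adjmxE trmxCK. Qed.

Lemma form_sum p (w : 'cV[C]_p) : (adjmx w *m w) 0 0 = \sum_k `|w k 0| ^+ 2.
Proof.
rewrite mxE; apply: eq_bigr => k _; rewrite !mxE normCKC //.
Qed.

Lemma form_ge0 p (w : 'cV[C]_p) : 0 <= (adjmx w *m w) 0 0.
Proof. by rewrite form_sum; apply: sumr_ge0 => k _; rewrite exprn_ge0. Qed.

Lemma unitary_adj n (U : 'M[C]_n) : U \is unitarymx -> U *m adjmx U = 1%:M /\ adjmx U *m U = 1%:M.
Proof.
move=> /unitarymxP HU; split => //. by apply: mulmx1C.
Qed.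

Lemma psd_decomp n (A : 'M[C]_n) : psdmx A -> exists (U : 'M[C]_n) (d : 'rV[C]_n),
  [/\ U \is unitarymx, A = adjmx U *m diag_mx d *m U & forall k, 0 <= d 0 k].
Proof.
move=> [Ah Aq].
have An : A \is normalmx by apply/normalmxP; rewrite -adjmxE Ah.
have /orthomx_spectralP := An.
set U := spectralmx A; set d := spectral_diag A => AE.
have Uu : U \is unitarymx by apply: spectral_unitarymx.
rewrite invmx_unitary // -adjmxE in AE.
exists U, d; split => // k.
have [H1 H2] := unitary_adj Uu.
have : d 0 k = (U *m A *m adjmx U) k k.
  by rewrite AE !mulmxA H1 mul1mx -mulmxA H1 mulmx1 mxE eqxx mulr1n.
move=> ->.
have := Aq (adjmx (row k U)).
rewrite adjmxK.
rewrite -row_mul.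
have -> : adjmx (row k U) = col k (adjmx U).
  by apply/matrixP => a b; rewrite !mxE.
rewrite !mxE; congr (_ <= _); apply: eq_bigr => j _; rewrite !mxE.
by [].
Qed.

Lemma diag_form n (d : 'rV[C]_n) (w : 'cV[C]_n) :
  (adjmx w *m diag_mx d *m w) 0 0 = \sum_k d 0 k * `|w k 0| ^+ 2.
Proof.
rewrite mul_mx_diag mxE; apply: eq_bigr => k _; rewrite !mxE normCKC.
by rewrite mulrA [_ * d 0 k]mulrC.
Qed.

Lemma psd_sqrt_exists n (A : 'M[C]_n) : psdmx A -> exists P, psdmx P /\ P *m P = A.
Proof.
move=> /psd_decomp [U [d [Uu AE dge]]].
have [H1 H2] := unitary_adj Uu.
pose s : 'rV[C]_n := \row_k sqrtC (d 0 k).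
have sge : forall k, 0 <= s 0 k by move=> k; rewrite mxE sqrtC_ge0.
exists (adjmx U *m diag_mx s *m U); split; [split|].
- rewrite !adjmxM adjmxK mulmxA; congr (_ *m _ *m _).
  apply/matrixP => a b; rewrite !mxE eq_sym; case: eqP => [->|_]; last by rewrite !mulr0n; apply/eqP; rewrite conjC_eq0.
  by rewrite !mulr1n geC0_conj // sqrtC_ge0.
- move=> v.
  have -> : adjmx v *m (adjmx U *m diag_mx s *m U) *m v = adjmx (U *m v) *m diag_mx s *m (U *m v).
    by rewrite adjmxM !mulmxA.
  rewrite diag_form; apply: sumr_ge0 => k _; apply: mulr_ge0 => //; exact: exprn_ge0.
- rewrite AE -!mulmxA; congr (_ *m _); rewrite [U *m (adjmx U *m _)]mulmxA H1 mul1mx mulmxA mulmx_diag; congr (_ *m _).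
  congr diag_mx; apply/rowP => k; rewrite !mxE -expr2 sqrtCK //.
Qed.

Lemma msqrt_spec n (A : 'M[C]_n) : psdmx A -> psdmx (msqrt A) /\ msqrt A *m msqrt A = A.
Proof. move=> HA; rewrite /msqrt; apply: (epsilon_spec (inhabits 0) (fun P => psdmx P /\ P *m P = A)); exact: psd_sqrt_exists. Qed.

Lemma sum_sq_le (I : finType) (F : I -> C) : (forall i, 0 <= F i) ->
  \sum_i F i ^+ 2 <= (\sum_i F i) ^+ 2.
Proof.
move=> F0; rewrite expr2 mulr_suml; apply: ler_sum => i _.
rewrite mulr_sumr (bigD1 i) //= expr2 lerDl; apply: sumr_ge0 => j _; exact: mulr_ge0.
Qed.

Lemma psd_tr_ge0 n (P : 'M[C]_n) : psdmx P -> 0 <= \tr P.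
Proof.
move=> /psd_decomp [U [d [Uu PE dge]]].
have [H1 H2] := unitary_adj Uu.
rewrite PE mxtrace_mulC mulmxA H1 mul1mx mxtrace_diag; exact: sumr_ge0.
Qed.

Lemma psd_tr_sq n (P : 'M[C]_n) : psdmx P -> \tr (P *m P) <= (\tr P) ^+ 2.
Proof.
move=> /psd_decomp [U [d [Uu PE dge]]].
have [H1 H2] := unitary_adj Uu.
have trc : forall M : 'M[C]_n, \tr (adjmx U *m M *m U) = \tr M.
  by move=> M; rewrite mxtrace_mulC mulmxA H1 mul1mx.
have -> : P *m P = adjmx U *m (diag_mx d *m diag_mx d) *m U.
  by rewrite PE -!mulmxA; congr (_ *m _); rewrite [U *m (adjmx U *m _)]mulmxA H1 mul1mx !mulmxA.
rewrite PE !trc mulmx_diag !mxtrace_diag.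
under eq_bigr do rewrite mxE -expr2.
exact: sum_sq_le.
Qed.

Lemma psd_XtX p q (X : 'M[C]_(p, q)) : psdmx (adjmx X *m X).
Proof.
split; first by rewrite adjmxM adjmxK.
move=> v; have -> : adjmx v *m (adjmx X *m X) *m v = adjmx (X *m v) *m (X *m v) by rewrite adjmxM !mulmxA.
exact: form_ge0.
Qed.

Lemma abs_tr_le n (X P : 'M[C]_n) : psdmx P -> P *m P = adjmx X *m X ->
  `|\tr X| <= \tr P.
Proof.
move=> /psd_decomp [U [d [Uu PE dge]]] XP.
have [H1 H2] := unitary_adj Uu.
pose Y := U *m X *m adjmx U.
have trY : \tr X = \tr Y by rewrite /Y mxtrace_mulC mulmxA H2 mul1mx.
have YY : adjmx Y *m Y = diag_mx d *m diag_mx d.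
  rewrite /Y !adjmxM adjmxK !mulmxA.
  rewrite -[U *m adjmx X *m adjmx U *m U]mulmxA H2 mulmx1.
  rewrite -[U *m adjmx X *m X]mulmxA -XP PE.
  rewrite !mulmxA H1 mul1mx -[diag_mx d *m U *m adjmx U]mulmxA H1 mulmx1.
  by rewrite -mulmxA H1 mulmx1.
have PT : \tr P = \sum_k d 0 k by rewrite PE mxtrace_mulC mulmxA H1 mul1mx mxtrace_diag.
rewrite trY PT; apply: le_trans (ler_norm_sum _ _ _) _; apply: ler_sum => k _.
have e : (adjmx Y *m Y) k k = \sum_l `|Y l k| ^+ 2.
  by rewrite mxE; apply: eq_bigr => l _; rewrite !mxE normCKC.
have e2 : (adjmx Y *m Y) k k = d 0 k ^+ 2 by rewrite YY mulmx_diag !mxE eqxx mulr1n expr2.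
have : `|Y k k| ^+ 2 <= d 0 k ^+ 2.
  rewrite -e2 e (bigD1 k) //= lerDl; apply: sumr_ge0 => l _; exact: exprn_ge0.
by rewrite ler_pXn2r // ?nnegrE.
Qed.

Lemma tr_psd_sq2 n (X P : 'M[C]_n) : psdmx P -> P *m P = adjmx X *m X ->
  \tr (adjmx X *m X) <= (\tr P) ^+ 2.
Proof. move=> HP <-; exact: psd_tr_sq. Qed.

Lemma trnorm_props n (X : 'M[C]_n) :
  [/\ 0 <= trnorm X, `|\tr X| <= trnorm X & \tr (adjmx X *m X) <= trnorm X ^+ 2].
Proof.
have [HP HPP] := msqrt_spec (psd_XtX X).
rewrite /trnorm; split.
- exact: psd_tr_ge0.
- exact: abs_tr_le.
- exact: tr_psd_sq2.
Qed.

Lemma sum_delta p (G : 'I_p -> C) (c : 'I_p) : \sum_b G b * (b == c)%:R = G c.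
Proof.
rewrite (bigD1 c) //= eqxx mulr1 big1 ?addr0 // => b /negbTE ->; by rewrite mulr0.
Qed.

Lemma sum_mxvec m n (F : 'I_(m * n) -> C) :
  \sum_a F a = \sum_i \sum_k F (mxvec_index i k).
Proof.
rewrite pair_big /= (reindex (uncurry (@mxvec_index m n))) /=.
  by apply: eq_bigr => -[i k].
case: (@curry_mxvec_bij m n) => g H1 H2; exists g => x _; [exact: H1 | exact: H2].
Qed.

Lemma tr_adj n (X : 'M[C]_n) : \tr (adjmx X) = (\tr X)^*.
Proof. rewrite /mxtrace rmorph_sum; apply: eq_bigr => k _; by rewrite !mxE. Qed.

Lemma adj_block m n (rho : 'M[C]_(m * n)) i j : adjmx rho = rho ->
  adjmx (blockB rho i j) = blockB rho j i.
Proof.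
move=> H; apply/matrixP => k l.
have := congr1 (fun M : 'M[C]_(m * n) => M (mxvec_index j k) (mxvec_index i l)) H.
by rewrite /= !mxE => <-.
Qed.

Lemma block_psd m n (rho : 'M[C]_(m * n)) i : psdmx rho -> psdmx (blockB rho i i).
Proof.
move=> [Hh Hq]; split; first exact: adj_block.
pose S : 'M[C]_(m * n, n) := \matrix_(a, k) ((a == mxvec_index i k)%:R).
have E : adjmx S *m rho *m S = blockB rho i i.
  apply/matrixP => k l; rewrite [LHS]mxE.
  have -> : \sum_b (adjmx S *m rho) k b * S b l = (adjmx S *m rho) k (mxvec_index i l).
    rewrite -sum_delta; apply: eq_bigr => b _; by rewrite [S _ _]mxE.
  rewrite mxE.
  have -> : \sum_a adjmx S k a * rho a (mxvec_index i l) = \sum_a rho a (mxvec_index i l) * (a == mxvec_index i k)%:R.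
    by apply: eq_bigr => a _; rewrite !mxE rmorph_nat mulrC.
  by rewrite sum_delta mxE.
move=> v; rewrite -E.
have -> : adjmx v *m (adjmx S *m rho *m S) *m v = adjmx (S *m v) *m rho *m (S *m v).
  by rewrite adjmxM !mulmxA.
exact: Hq.
Qed.

Lemma tr_sq_blocks m n (rho : 'M[C]_(m * n)) :
  \tr (rho *m rho) = \sum_i \sum_j \tr (blockB rho i j *m blockB rho j i).
Proof.
rewrite /mxtrace.
under eq_bigr do rewrite mxE sum_mxvec.
rewrite sum_mxvec; apply: eq_bigr => i _.
rewrite exchange_big /=; apply: eq_bigr => j _.
apply: eq_bigr => k _; rewrite mxE; apply: eq_bigr => l _; by rewrite !mxE.
Qed.

End S.

Theorem proposition6 (R : realType) (m n : nat) (rho : 'M[R[i]]_(m * n)) :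
  density rho ->
  Cl1AB rho ^+ 2 - Cl1 (ptraceB rho) ^+ 2 >=
    2 * (\tr (rho *m rho) - \tr (ptraceB rho *m ptraceB rho)).
Proof.
move=> [Hpsd _]; have Hh := proj1 Hpsd.
pose t i j := trnorm (blockB rho i j).
pose c i j := `|\tr (blockB rho i j)|.
pose f i j := \tr (adjmx (blockB rho i j) *m blockB rho i j).
have E1 : Cl1AB rho = \sum_i \sum_(j | i != j) t i j by [].
have E2 : Cl1 (ptraceB rho) = \sum_i \sum_(j | i != j) c i j.
  by apply: eq_bigr => i _; apply: eq_bigr => j _; rewrite mxE.
have E3 : \tr (rho *m rho) = \sum_i \sum_j f i j.
  rewrite tr_sq_blocks; apply: eq_bigr => i _; apply: eq_bigr => j _.
  by rewrite -(adj_block i j Hh) mxtrace_mulC.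
have E4 : \tr (ptraceB rho *m ptraceB rho) = \sum_i \sum_j c i j ^+ 2.
  rewrite /mxtrace; apply: eq_bigr => i _; rewrite mxE; apply: eq_bigr => j _.
  by rewrite !mxE -(adj_block i j Hh) tr_adj normCK.
rewrite E1 E2 E3 E4; apply: alg_ineq.
- by move=> i j; exact: normr_ge0.
- by move=> i j; have [] := trnorm_props (blockB rho i j).
- by move=> i j; apply: psd_tr_ge0; exact: psd_XtX.
- by move=> i j; have [] := trnorm_props (blockB rho i j).
- move=> i j; rewrite /f -(adj_block i j Hh) -(adj_block j i Hh) adjmxK.
  by rewrite mxtrace_mulC.
- by move=> i j; rewrite /c -(adj_block i j Hh) tr_adj norm_conjC.
- move=> i; rewrite /f /c (adj_block i i Hh).
  have Bp := block_psd i Hpsd.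
  by rewrite ger0_norm ?psd_tr_ge0 //; exact: psd_tr_sq.
Qed.
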